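(* Let $q$ be a positive integer, $0\leq\alpha<1$ and $\tau>0$. Then there exists a constant $C=C(\tau,\alpha)>0$ with the following property. Let $(a_j)_{j=q}^\infty$ be a nondecreasing sequence of positive real numbers and $$b_j=\begin{cases}\tau j^{1/\alpha}, & \alpha>0,\\ e^{\tau j}, & \alpha=0.\end{cases}$$ Suppose $j+1\leq a_j\leq b_j$ for all $j=q,q+1,q+2,\dots$. Then there exists an integer $k\geq q$ such that $$a_{k+1}-a_k\leq C(a_k-k)^{1-\alpha}.$$ *)

(* Defs.v *)
From Stdlib Require Import Reals Lra Lia.
Open Scope R_scope.

Definition bseq (tau alpha : R) (j : nat) : R :=
  if Rlt_dec 0 alpha then tau * Rpower (INR j) (1 / alpha)
  else exp (tau * INR j).

(* Main.v *)
Require Import Defs.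
From Stdlib Require Import Reals Lra Lia Classical.
Open Scope R_scope.

Lemma exp_le' x y : x <= y -> exp x <= exp y.
Proof. intros [H|H]; [left; apply exp_increasing; auto | subst; lra]. Qed.

Lemma ln_le' x y : 0 < x -> x <= y -> ln x <= ln y.
Proof. intros Hx [H|H]; [left; apply ln_increasing; auto | subst; lra]. Qed.

Lemma Rpower_le_base x y e : 0 < x -> x <= y -> 0 <= e -> Rpower x e <= Rpower y e.
Proof.
  intros Hx Hxy He. unfold Rpower. apply exp_le'.
  apply Rmult_le_compat_l; auto. apply ln_le'; auto.
Qed.

Lemma exp_bound z : 0 <= z -> exp z <= 1 + z * exp z.
Proof.
  intros Hz. pose proof (exp_ineq1_le (- z)) as H.
  rewrite exp_Ropp in H. pose proof (exp_pos z).
  assert (H1 : (1 - z) * exp z <= / exp z * exp z) by (apply Rmult_le_compat_r; lra).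
  rewrite Rinv_l in H1 by lra. nra.
Qed.

Lemma ln1p_le y : 0 < y -> ln (1 + y) <= y.
Proof.
  intros Hy. rewrite <- (ln_exp y) at 2. apply ln_le'. lra. apply exp_ineq1_le.
Qed.

Lemma key_step (al E c c' : R) : 0 < al -> 0 < E -> 1 <= c ->
  c' >= c + ((1/al) * E * exp ((1/al) * E)) * Rpower c (1 - al) ->
  Rpower c' al >= Rpower c al + E.
Proof.
  intros Hal HE Hc Hc'.
  set (p := 1 / al).
  assert (Hp : p * al = 1) by (unfold p; field; lra).
  assert (Hp0 : 0 < p) by (unfold p; apply Rdiv_lt_0_compat; lra).
  set (v := Rpower c al).
  assert (Hv : 1 <= v).
  { unfold v. rewrite <- (Rpower_O c) by lra. apply Rle_Rpower; lra. }
  set (y := E / v).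
  assert (Hy0 : 0 < y) by (unfold y; apply Rdiv_lt_0_compat; lra).
  assert (HyE : y <= E).
  { unfold y. apply (Rmult_le_reg_r v); [lra|]. unfold Rdiv. rewrite Rmult_assoc, Rinv_l by lra. nra. }
  assert (Hvy : v + E = v * (1 + y)) by (unfold y; field; lra).
  assert (Hlnv : ln v = al * ln c) by (unfold v, Rpower; rewrite ln_exp; auto).
  assert (HcR : Rpower c (1 - al) = c / v).
  { unfold v, Rpower. unfold Rdiv. rewrite <- exp_Ropp.
    transitivity (exp (ln c) * exp (- (al * ln c))); [| rewrite exp_ln by lra; auto].
    rewrite <- exp_plus. f_equal. ring. }
  set (T := exp (p * ln (v + E))).
  assert (HT : T = c * exp (p * ln (1 + y))).
  { unfold T. rewrite Hvy, ln_mult by lra. rewrite Hlnv.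
    replace (p * (al * ln c + ln (1 + y))) with (ln c + p * ln (1 + y))
      by (transitivity ((p * al) * ln c + p * ln (1 + y)); [rewrite Hp; ring | ring]).
    rewrite exp_plus, exp_ln by lra. auto. }
  assert (Hb : exp (p * ln (1 + y)) <= 1 + p * y * exp (p * E)).
  { apply Rle_trans with (exp (p * y)).
    - apply exp_le'. apply Rmult_le_compat_l; [lra|]. apply ln1p_le; auto.
    - apply Rle_trans with (1 + p * y * exp (p * y)).
      + apply exp_bound. nra.
      + assert (exp (p * y) <= exp (p * E)) by (apply exp_le'; nra).
        assert (0 <= p * y) by nra. nra. }
  assert (HTc : T <= c').
  { rewrite HT. apply Rle_trans with (c * (1 + p * y * exp (p * E))).
    - apply Rmult_le_compat_l; lra.
    - rewrite HcR in Hc'. fold p in Hc'.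
      replace (c * (1 + p * y * exp (p * E))) with (c + p * E * exp (p * E) * (c / v))
        by (unfold y; field; lra). lra. }
  assert (HT0 : 0 < T) by (unfold T; apply exp_pos).
  apply Rle_ge. apply Rle_trans with (Rpower T al).
  - unfold T, Rpower at 1. rewrite ln_exp.
    replace (al * (p * ln (v + E))) with ((p * al) * ln (v + E)) by ring.
    rewrite Hp, Rmult_1_l, exp_ln by lra. lra.
  - apply Rpower_le_base; lra.
Qed.

Theorem lemma3p4 (alpha tau : R) (Halpha0 : 0 <= alpha) (Halpha1 : alpha < 1)
  (Htau : 0 < tau) :
  exists C : R, 0 < C /\
    forall (q : nat) (a : nat -> R),
      (1 <= q)%nat ->
      (forall j : nat, (q <= j)%nat -> 0 < a j) ->
      (forall j : nat, (q <= j)%nat -> a j <= a (S j)) ->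
      (forall j : nat, (q <= j)%nat -> INR j + 1 <= a j <= bseq tau alpha j) ->
      exists k : nat, (q <= k)%nat /\
        a (S k) - a k <= C * Rpower (a k - INR k) (1 - alpha).
Proof.
  destruct (Rlt_dec 0 alpha) as [Hpos | Hnpos].
  - set (p := 1 / alpha).
    set (E := 2 * Rpower tau alpha).
    assert (HE : 0 < E) by (unfold E, Rpower; pose proof (exp_pos (alpha * ln tau)); lra).
    set (D := p * E * exp (p * E)).
    assert (Hp0 : 0 < p) by (unfold p; apply Rdiv_lt_0_compat; lra).
    assert (HD : 0 < D) by (unfold D; pose proof (exp_pos (p * E)); apply Rmult_lt_0_compat; nra).
    exists (D + 1). split; [lra|].
    intros q a Hq Ha Hmono Hb.
    apply NNPP. intros Hno.
    assert (Hgt : forall k, (q <= k)%nat -> a (S k) - a k > (D + 1) * Rpower (a k - INR k) (1 - alpha)).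
    { intros k Hk. apply Rnot_le_gt. intros Hle. apply Hno. exists k. auto. }
    set (c := fun k => a k - INR k).
    assert (Hc1 : forall k, (q <= k)%nat -> 1 <= c k).
    { intros k Hk. unfold c. pose proof (Hb k Hk). lra. }
    assert (Hstep : forall k, (q <= k)%nat -> c (S k) >= c k + D * Rpower (c k) (1 - alpha)).
    { intros k Hk. pose proof (Hgt k Hk) as H. pose proof (Hc1 k Hk).
      assert (1 <= Rpower (c k) (1 - alpha)).
      { rewrite <- (Rpower_O (c k)) at 1 by lra. apply Rle_Rpower; lra. }
      unfold c in *; cbv beta in *. rewrite S_INR. lra. }
    assert (Hind : forall m, Rpower (c (q + m)%nat) alpha >= 1 + E * INR m).
    { induction m.
      - rewrite Nat.add_0_r. simpl. rewrite Rmult_0_r, Rplus_0_r.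
        apply Rle_ge. rewrite <- (Rpower_O (c q)) by (pose proof (Hc1 q (le_n q)); lra).
        apply Rle_Rpower; [apply Hc1; lia | lra].
      - replace (q + S m)%nat with (S (q + m)) by lia.
        pose proof (key_step alpha E (c (q+m)%nat) (c (S (q+m)))) as K.
        rewrite S_INR.
        assert (1 <= c (q + m)%nat) by (apply Hc1; lia).
        specialize (K Hpos HE H). fold p in K. fold D in K.
        specialize (K (Hstep (q + m)%nat ltac:(lia))). lra. }
    specialize (Hind q).
    assert (Hj : (q <= q + q)%nat) by lia.
    pose proof (Hb _ Hj) as [Hlo Hhi].
    unfold bseq in Hhi. destruct (Rlt_dec 0 alpha) as [_|]; [|contradiction].
    assert (HcJ : 0 < c (q + q)%nat) by (pose proof (Hc1 _ Hj); lra).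
    assert (Hca : c (q + q)%nat <= tau * Rpower (INR (q + q)) (1 / alpha)).
    { unfold c. pose proof (pos_INR (q+q)). lra. }
    assert (HINR : 0 < INR (q + q)) by (apply lt_0_INR; lia).
    assert (Hup : Rpower (c (q + q)%nat) alpha <= Rpower tau alpha * INR (q + q)).
    { apply Rle_trans with (Rpower (tau * Rpower (INR (q + q)) (1 / alpha)) alpha).
      - apply Rpower_le_base; lra.
      - rewrite <- Rpower_mult_distr; [| lra | unfold Rpower; apply exp_pos].
        rewrite Rpower_mult. replace (1 / alpha * alpha) with 1 by (field; lra).
        rewrite Rpower_1 by lra. lra. }
    rewrite plus_INR in Hup. unfold E in Hind. lra.
  - assert (Ha0 : alpha = 0) by lra. subst alpha.
    exists (exp (2 * tau)). split; [apply exp_pos|].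
    intros q a Hq Ha Hmono Hb.
    apply NNPP. intros Hno.
    set (c := fun k => a k - INR k).
    assert (Hc1 : forall k, (q <= k)%nat -> 1 <= c k).
    { intros k Hk. unfold c. pose proof (Hb k Hk). lra. }
    assert (Hstep : forall k, (q <= k)%nat -> c (S k) >= exp (2 * tau) * c k).
    { intros k Hk. pose proof (Hc1 k Hk) as Hck.
      assert (H : a (S k) - a k > exp (2 * tau) * Rpower (a k - INR k) (1 - 0)).
      { apply Rnot_le_gt. intros Hle. apply Hno. exists k. auto. }
      rewrite Rminus_0_r, Rpower_1 in H by (unfold c in *; lra).
      unfold c in *; cbv beta in *. rewrite S_INR. lra. }
    assert (Hind : forall m, c (q + m)%nat >= exp (2 * tau * INR m)).
    { induction m.
      - rewrite Nat.add_0_r. simpl. rewrite Rmult_0_r, exp_0.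
        apply Rle_ge. apply Hc1; lia.
      - replace (q + S m)%nat with (S (q + m)) by lia.
        rewrite S_INR. replace (2 * tau * (INR m + 1)) with (2 * tau + 2 * tau * INR m) by ring.
        rewrite exp_plus. pose proof (Hstep (q + m)%nat ltac:(lia)).
        pose proof (exp_pos (2 * tau)). nra. }
    specialize (Hind (S q)).
    assert (Hj : (q <= q + S q)%nat) by lia.
    pose proof (Hb _ Hj) as [Hlo Hhi].
    unfold bseq in Hhi. destruct (Rlt_dec 0 0) as [Hf|]; [lra|].
    assert (Hle : exp (2 * tau * INR (S q)) <= exp (tau * INR (q + S q))).
    { unfold c in Hind. pose proof (pos_INR (q + S q)). lra. }
    rewrite plus_INR, S_INR in Hle.
    destruct Hle as [Hle|Hle].
    + apply exp_lt_inv in Hle. nra.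
    + apply (f_equal ln) in Hle. rewrite !ln_exp in Hle. nra.
Qed.
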